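(* For all $m,t\in\mathbb{N}$ and $1\leq r\leq m$, \[ R_t(r,m)\leq \left(1-\frac{1}{2^t}\right)2^m -\frac{\sqrt{2^t-1}}{2^t}\binom{m}{r}. \]
   Context: For a $t\times n$ matrix $\mathbf{v}$ over $\mathbb{F}_2$ with rows $\overline{v}_1,\dots,\overline{v}_t$, $\mathrm{wt}^{(t)}(\mathbf{v})=\left|\bigcup_{i} \mathrm{supp}(\overline{v}_i)\right|$ and $d^{(t)}(\mathbf{u},\mathbf{v})=\mathrm{wt}^{(t)}(\mathbf{u}-\mathbf{v})$. For a linear code $C\subseteq\mathbb{F}_2^n$, $C^t$ is the set of $t\times n$ matrices all of whose rows lie in $C$, and $R_t(C)$ is the smallest integer $\rho$ such that for every $\mathbf{v}\in\mathbb{F}_2^{t\times n}$ some $\mathbf{c}\in C^t$ has $d^{(t)}(\mathbf{v},\mathbf{c})\le\rho$. Reed–Muller codes $\mathrm{RM}(r,m)\subseteq\mathbb{F}_2^{2^m}$: $\mathrm{RM}(0,m)=\{\overline{0},\overline{1}\}$, $\mathrm{RM}(m,m)=\mathbb{F}_2^{2^m}$, and for $1\leq r\leq m-1$, $\mathrm{RM}(r,m)=\{(\overline{u},\overline{u}+\overline{v}) : \overline{u}\in \mathrm{RM}(r,m-1),\ \overline{v}\in\mathrm{RM}(r-1,m-1)\}$. $R_t(r,m)=R_t(\mathrm{RM}(r,m))$. *)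

(* Defs.v *)
From Stdlib Require Import Reals.
From mathcomp Require Import all_boot.

Set Implicit Arguments.
Unset Strict Implicit.
Unset Printing Implicit Defensive.

Definition word (n : nat) := n.-tuple bool.

(* Reed--Muller membership on raw bit sequences, following the (u | u+v)
   recursion:  RM(0,m) = {0,1},  RM(m,m) = F_2^{2^m},
   RM(r,m) = {(u, u+v) : u in RM(r,m-1), v in RM(r-1,m-1)} for 1 <= r <= m-1. *)
Fixpoint inRM (r m : nat) (w : seq bool) : bool :=
  match m with
  | 0 => size w == 1
  | m'.+1 =>
      if r == 0 then (size w == 2 ^ m) &&
                     ((w == nseq (2 ^ m) false) || (w == nseq (2 ^ m) true))
      else if m <= r then size w == 2 ^ m
      else let u := take (2 ^ m') w in
           let uv := drop (2 ^ m') w in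
           (size w == 2 ^ m) && inRM r m' u &&
           inRM r.-1 m' [seq x.1 (+) x.2 | x <- zip u uv]
  end.

Definition RM (r m : nat) : {pred word (2 ^ m)} := fun w => inRM r m (tval w).

Definition mat (t n : nat) := {ffun 'I_t -> word n}.

(* wt^(t)(u - v) = size of the union of supports of the rows of u - v
   (over F_2, u - v = u xor v). *)
Definition dist_t (t n : nat) (u v : mat t n) : nat :=
  #|[set j : 'I_n | [exists i : 'I_t, tnth (u i) j != tnth (v i) j]]|.

Definition rows_in (t n : nat) (C : {pred word n}) (c : mat t n) : bool :=
  [forall i : 'I_t, c i \in C].

Definition covers (t n : nat) (C : {pred word n}) (rho : nat) : bool :=
  [forall v : mat t n, [exists c : mat t n, rows_in C c && (dist_t v c <= rho)]].

(* Since all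
   distances are <= n, if any rho works then some rho <= n works, so the
   search over 0..n returns exactly the least such rho. *)
Definition Rt (t n : nat) (C : {pred word n}) : nat :=
  find (covers t C) (iota 0 n.+1).

Arguments RM : clear implicits.
Definition Rt_RM (t r m : nat) : nat := Rt t (RM r m).

(* Main.v *)
Require Import Defs.
From Stdlib Require Import Reals.
From mathcomp Require Import all_boot.
From Stdlib Require Import ZArith Lia Lra Psatz.
From mathcomp Require Import all_boot zify.

(* Proof strategy: R_t(r,m) <= R_t(r,m-1) + R_t(r-1,m-1) (via the (u|u+v) construction),
   base cases r = m (full code) and r = 1 (greedy row-by-row second-moment/Parseval
   argument over affine functions). *)

Definition sumZ {A} (f : A -> Z) (l : seq A) : Z := foldr (fun x acc => (f x + acc)%Z) 0%Z l.

Arguments sumZ : simpl never.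
Lemma sumZ_cons A (f : A -> Z) x l : sumZ f (x :: l) = (f x + sumZ f l)%Z.
Proof. by []. Qed.
Lemma sumZ_nil A (f : A -> Z) : sumZ f [::] = 0%Z.
Proof. by []. Qed.

Lemma sumZ_cat A (f : A -> Z) l1 l2 : sumZ f (l1 ++ l2) = (sumZ f l1 + sumZ f l2)%Z.
Proof. elim: l1 => [|x l IH]; rewrite ?cat_cons ?sumZ_cons ?sumZ_nil ?IH /=; lia. Qed.

Lemma sumZ_map A B (g : A -> B) (f : B -> Z) l : sumZ f (map g l) = sumZ (fun x => f (g x)) l.
Proof. by elim: l => [|x l IH] //; rewrite map_cons !sumZ_cons IH. Qed.

Lemma sumZ_ext A (f g : A -> Z) l : (forall x, f x = g x) -> sumZ f l = sumZ g l.
Proof. by move=> H; elim: l => [|x l IH] //; rewrite !sumZ_cons IH H. Qed.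

Lemma sumZ_add A (f g : A -> Z) l : sumZ (fun x => f x + g x)%Z l = (sumZ f l + sumZ g l)%Z.
Proof. elim: l => [|x l IH] //; rewrite !sumZ_cons IH; lia. Qed.

Lemma sumZ_scale A (f : A -> Z) c l : sumZ (fun x => c * f x)%Z l = (c * sumZ f l)%Z.
Proof. elim: l => [|x l IH]; rewrite ?sumZ_nil ?sumZ_cons ?IH; lia. Qed.

Lemma sumZ_exists A (f : A -> Z) l W : l <> [::] ->
  (Z.of_nat (size l) * W <= sumZ f l)%Z -> exists x, (W <= f x)%Z.
Proof.
elim: l => [//|x l IH] _; rewrite sumZ_cons => H.
case: (Z_le_gt_dec W (f x)) => Hx; first by exists x.
case: l IH H => [|y l] IH H.
  exfalso; move: H; rewrite [size _]/= Z.mul_1_l /sumZ /=; lia.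
have [z Hfz] : exists z, (W <= f z)%Z.
  apply: IH => //. have E : size (x :: y :: l) = (size (y :: l)).+1 by [].
  rewrite E Nat2Z.inj_succ in H. lia.
by exists z.
Qed.

Definition corr (ws : seq Z) (c : seq bool) : Z :=
  sumZ (fun p : Z * bool => if p.2 then (- p.1)%Z else p.1) (zip ws c).

Definition sumsq (ws : seq Z) : Z := sumZ (fun x => x * x)%Z ws.

Lemma corr_cat L R w w' : size L = size w -> corr (L ++ R) (w ++ w') = (corr L w + corr R w')%Z.
Proof. by move=> H; rewrite /corr zip_cat // sumZ_cat. Qed.

Lemma corr_addb R w a : corr R (map (addb a) w) = if a then (- corr R w)%Z else corr R w.
Proof.
elim: R w => [|x R IH] [|y w]; try by rewrite /corr /= ?sumZ_nil; case: ifP.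
rewrite /corr /= !sumZ_cons -!/(corr _ _) IH.
by case: (a); case: y => /=; lia.
Qed.

Fixpoint aff0 (m : nat) (s : seq bool) : seq bool :=
  match m with
  | 0 => [:: false]
  | m'.+1 => let w := aff0 m' (behead s) in w ++ map (addb (head false s)) w
  end.

Fixpoint allseq (m : nat) : seq (seq bool) :=
  match m with
  | 0 => [:: [::]]
  | m'.+1 => map (cons false) (allseq m') ++ map (cons true) (allseq m')
  end.

Lemma aff0S m s : aff0 m.+1 s = aff0 m (behead s) ++ map (addb (head false s)) (aff0 m (behead s)).
Proof. by []. Qed.

Lemma size_aff0 m s : size (aff0 m s) = 2 ^ m.
Proof. by elim: m s => [|m IH] s //=; rewrite size_cat size_map IH expnS mul2n addnn. Qed.

Lemma size_allseq m : size (allseq m) = 2 ^ m.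
Proof. by elim: m => [|m IH] //=; rewrite size_cat !size_map IH expnS mul2n addnn. Qed.

Lemma sumsq_cat L R : sumsq (L ++ R) = (sumsq L + sumsq R)%Z.
Proof. by rewrite /sumsq sumZ_cat. Qed.

Lemma parseval m ws : size ws = 2 ^ m ->
  sumZ (fun s => corr ws (aff0 m s) * corr ws (aff0 m s))%Z (allseq m) = (Z.of_nat (2 ^ m) * sumsq ws)%Z.
Proof.
elim: m ws => [|m IH] ws Hs.
  case: ws Hs => [|x [|y ws]] // _.
  rewrite expn0 Z.mul_1_l /corr /sumsq /= !sumZ_cons !sumZ_nil /=; lia.
rewrite -(cat_take_drop (2 ^ m) ws).
have HL : size (take (2 ^ m) ws) = 2 ^ m by rewrite size_takel // Hs expnS; lia.
have HR : size (drop (2 ^ m) ws) = 2 ^ m by rewrite size_drop Hs expnS; lia.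
set L := take _ ws; set R := drop _ ws.
rewrite [allseq _]/= sumZ_cat !sumZ_map.
rewrite -sumZ_add.
rewrite (@sumZ_ext _ _ (fun s => 2 * (corr L (aff0 m s) * corr L (aff0 m s)) + 2 * (corr R (aff0 m s) * corr R (aff0 m s)))%Z).
  rewrite sumZ_add !sumZ_scale !IH // sumsq_cat expnS Nat2Z.inj_mul. lia.
move=> s; rewrite !aff0S !corr_cat ?size_map ?size_aff0 // !corr_addb; cbn [behead head]. lia.
Qed.


Definition eqmask (v c : seq bool) := [seq x.1 == x.2 | x <- zip v c].
Definition andmask (S T : seq bool) := [seq x.1 && x.2 | x <- zip S T].
Definition xorw (u v : seq bool) := [seq x.1 (+) x.2 | x <- zip u v].
Definition wts (S v : seq bool) : seq Z :=
  [seq (if x.1 then (if x.2 then (-1)%Z else 1%Z) else 0%Z) | x <- zip S v].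

Lemma sumsq_wts S v : size S = size v -> sumsq (wts S v) = Z.of_nat (count id S).
Proof.
elim: S v => [|a S IH] [|b v] //= [] /IH H.
rewrite /sumsq /wts /= sumZ_cons -/(wts _ _) -/(sumsq _) H.
rewrite Nat2Z.inj_add; by case: a; case: b => /=; lia.
Qed.

Lemma elemZ (a b d : bool) :
  (if d then - (if a then (if b then -1 else 1) else 0) else (if a then (if b then -1 else 1) else 0))%Z
  = (2 * Z.of_nat (a && (b == d)) - Z.of_nat a)%Z.
Proof. by case: a; case: b; case: d. Qed.

Lemma corr_wts S v c : size S = size v -> size v = size c ->
  corr (wts S v) c = (2 * Z.of_nat (count id (andmask S (eqmask v c))) - Z.of_nat (count id S))%Z.
Proof.
elim: S v c => [|a S IH] [|b v] [|d c] // [H1] [H2].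
have -> : count id (andmask (a :: S) (eqmask (b :: v) (d :: c))) =
   (a && (b == d)) + count id (andmask S (eqmask v c)) by [].
have -> : count id (a :: S) = a + count id S by [].
have -> : corr (wts (a :: S) (b :: v)) (d :: c) =
   ((if d then - (if a then (if b then -1 else 1) else 0) else (if a then (if b then -1 else 1) else 0)) + corr (wts S v) c)%Z by [].
rewrite elemZ IH // !Nat2Z.inj_add. lia.
Qed.

Lemma inRM0_nseq m a : inRM 0 m (nseq (2 ^ m) a).
Proof.
case: m => [|m]; first by [].
rewrite [inRM _ _ _]/=.
by rewrite size_nseq eqxx /=; case: a; rewrite eqxx ?orbT.
Qed.

Lemma xor_aff b a w : xorw (map (addb b) w) (map (addb b) (map (addb a) w)) = nseq (size w) a.
Proof.
elim: w => [|x w IH] //.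
have -> : xorw (map (addb b) (x :: w)) (map (addb b) (map (addb a) (x :: w))) =
  (b (+) x) (+) (b (+) (a (+) x)) :: xorw (map (addb b) w) (map (addb b) (map (addb a) w)) by [].
by rewrite IH; case: (a); case: (b); case: (x).
Qed.

Lemma inRM_S r m w : 0 < r -> r <= m ->
  inRM r m.+1 w = [&& size w == 2 ^ m.+1, inRM r m (take (2 ^ m) w) &
                      inRM r.-1 m (xorw (take (2 ^ m) w) (drop (2 ^ m) w))].
Proof.
case: r => // r _ H.
have -> : inRM r.+1 m.+1 w = if m.+1 <= r.+1 then size w == 2 ^ m.+1 else
   (size w == 2 ^ m.+1) && inRM r.+1 m (take (2 ^ m) w) &&
                      inRM r m (xorw (take (2 ^ m) w) (drop (2 ^ m) w)) by [].
by rewrite ltnNge H /= -andbA.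
Qed.

Lemma inRM_full r m w : 0 < r -> m.+1 <= r -> inRM r m.+1 w = (size w == 2 ^ m.+1).
Proof.
case: r => // r _ H.
have -> : inRM r.+1 m.+1 w = if m.+1 <= r.+1 then size w == 2 ^ m.+1 else
   (size w == 2 ^ m.+1) && inRM r.+1 m (take (2 ^ m) w) &&
                      inRM r m (xorw (take (2 ^ m) w) (drop (2 ^ m) w)) by [].
by rewrite H.
Qed.

Lemma inRM_size r m w : inRM r m w -> size w = 2 ^ m.
Proof.
case: m => [|m]; first by move=> /= /eqP ->; rewrite expn0.
case: r => [|r].
  by move=> /= /andP [/eqP -> _].
case: (leqP m.+1 r.+1) => H.
  by rewrite inRM_full // => /eqP.
by rewrite inRM_S // => /and3P [/eqP -> _ _].
Qed.

Lemma inRM1_aff m b s : 0 < m -> inRM 1 m (map (addb b) (aff0 m s)).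
Proof.
case: m => [//|m] _.
elim: m b s => [|m IH] b s.
  by rewrite inRM_full // size_map size_aff0.
rewrite inRM_S // size_map size_aff0 eqxx andTb.
rewrite aff0S map_cat take_size_cat ?size_map ?size_aff0 // IH // andTb.
rewrite drop_size_cat ?size_map ?size_aff0 //.
rewrite xor_aff size_aff0.
exact: inRM0_nseq.
Qed.

Lemma size_wts S v : size (wts S v) = minn (size S) (size v).
Proof. by rewrite size_map size_zip. Qed.

Lemma step m S v : 0 < m -> size S = 2 ^ m -> size v = 2 ^ m ->
  exists c, inRM 1 m c /\ (count id S <= 2 * count id (andmask S (eqmask v c))) /\
   (Z.of_nat (count id S) <= (2 * Z.of_nat (count id (andmask S (eqmask v c))) - Z.of_nat (count id S)) *
                            (2 * Z.of_nat (count id (andmask S (eqmask v c))) - Z.of_nat (count id S)))%Z.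
Proof.
move=> Hm HS Hv.
have Hw : size (wts S v) = 2 ^ m by rewrite size_wts HS Hv minnn.
have P := parseval _ _ Hw.
rewrite sumsq_wts ?HS ?Hv // in P.
have [x Hx] : exists x, (Z.of_nat (count id S) <= corr (wts S v) (aff0 m x) * corr (wts S v) (aff0 m x))%Z.
  apply: (@sumZ_exists _ _ (allseq m)).
    by move=> E; have := size_allseq m; rewrite E /= => /esym/eqP; rewrite expn_eq0.
  by rewrite P size_allseq; lia.
have key : forall b, corr (wts S v) (map (addb b) (aff0 m x)) =
  (2 * Z.of_nat (count id (andmask S (eqmask v (map (addb b) (aff0 m x))))) - Z.of_nat (count id S))%Z.
  by move=> b; rewrite corr_wts // ?HS ?Hv // size_map size_aff0.
case: (Z_le_gt_dec 0 (corr (wts S v) (aff0 m x))) => HP.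
  exists (map (addb false) (aff0 m x)); split; first exact: inRM1_aff.
  have := key false; rewrite corr_addb => E.
  split; [|rewrite -E //]. 
  lia.
exists (map (addb true) (aff0 m x)); split; first exact: inRM1_aff.
have := key true; rewrite corr_addb => E.
split; [|rewrite -E; lia].
lia.
Qed.


Fixpoint Mg (S : seq bool) (vs cs : seq (seq bool)) : seq bool :=
  match vs, cs with
  | v :: vs', c :: cs' => Mg (andmask S (eqmask v c)) vs' cs'
  | _, _ => S
  end.

Definition allsz n (vs : seq (seq bool)) := all (fun w => size w == n) vs.

Lemma size_eqmask v c : size (eqmask v c) = minn (size v) (size c).
Proof. by rewrite size_map size_zip. Qed.
Lemma size_andmask v c : size (andmask v c) = minn (size v) (size c).
Proof. by rewrite size_map size_zip. Qed.
Lemma size_xorw v c : size (xorw v c) = minn (size v) (size c).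
Proof. by rewrite size_map size_zip. Qed.

Lemma size_Mg n S vs cs : size S = n -> allsz n vs -> allsz n cs -> size (Mg S vs cs) = n.
Proof.
elim: vs cs S => [|v vs IH] [|c cs] S //= HS /andP [/eqP Hv Hvs] /andP [/eqP Hc Hcs].
by apply: IH => //; rewrite size_andmask size_eqmask HS Hv Hc !minnn.
Qed.

Lemma eqmask_cat a b u x : size a = size u -> eqmask (a ++ b) (u ++ x) = eqmask a u ++ eqmask b x.
Proof. by move=> H; rewrite /eqmask zip_cat // map_cat. Qed.
Lemma andmask_cat a b u x : size a = size u -> andmask (a ++ b) (u ++ x) = andmask a u ++ andmask b x.
Proof. by move=> H; rewrite /andmask zip_cat // map_cat. Qed.

Lemma Mg_cat h k vs us xs S1 S2 : size S1 = h -> size S2 = k ->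
  allsz (h + k) vs -> allsz h us -> allsz k xs -> size vs = size us -> size us = size xs ->
  Mg (S1 ++ S2) vs [seq p.1 ++ p.2 | p <- zip us xs] =
  Mg S1 (map (take h) vs) us ++ Mg S2 (map (drop h) vs) xs.
Proof.
elim: vs us xs S1 S2 => [|v vs IH] [|u us] [|x xs] S1 S2 //= H1 H2
  /andP [/eqP Hv Hvs] /andP [/eqP Hu Hus] /andP [/eqP Hx Hxs] [E1] [E2].
rewrite -{1}(cat_take_drop h v) eqmask_cat; last by rewrite size_takel ?Hv ?Hu //; lia.
rewrite andmask_cat; last by rewrite size_eqmask size_takel ?Hv ?Hu ?minnn //; lia.
apply: IH => //.
  by rewrite size_andmask size_eqmask size_takel ?Hv ?Hu ?minnn ?H1 //; lia.
by rewrite size_andmask size_eqmask size_drop Hv Hx addKn minnn H2 minnn.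
Qed.

Lemma eqmask_xor b u w : size b = size u -> size u = size w ->
  eqmask b (xorw u w) = eqmask (xorw b u) w.
Proof.
elim: b u w => [|x b IH] [|y u] [|z w] //= [H1] [H2].
have -> : eqmask (x :: b) (xorw (y :: u) (z :: w)) = (x == y (+) z) :: eqmask b (xorw u w) by [].
have -> : eqmask (xorw (x :: b) (y :: u)) (z :: w) = (x (+) y == z) :: eqmask (xorw b u) w by [].
by rewrite IH //; case: x; case: y; case: z.
Qed.

Lemma Mg_xor n S vs us ws : allsz n vs -> allsz n us -> allsz n ws ->
  size vs = size us -> size us = size ws ->
  Mg S vs [seq xorw p.1 p.2 | p <- zip us ws] = Mg S [seq xorw p.1 p.2 | p <- zip vs us] ws.
Proof.
elim: vs us ws S => [|v vs IH] [|u us] [|w ws] S //=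
  /andP [/eqP Hv Hvs] /andP [/eqP Hu Hus] /andP [/eqP Hw Hws] [E1] [E2].
by rewrite eqmask_xor ?Hv ?Hu ?Hw // IH.
Qed.

Lemma eqmask_self v : eqmask v v = nseq (size v) true.
Proof.
elim: v => [|x v IH] //.
have -> : eqmask (x :: v) (x :: v) = (x == x) :: eqmask v v by [].
by rewrite IH eqxx.
Qed.

Lemma andmask_true S : andmask S (nseq (size S) true) = S.
Proof.
elim: S => [|x S IH] //.
have -> : andmask (x :: S) (nseq (size (x :: S)) true) = (x && true) :: andmask S (nseq (size S) true) by [].
by rewrite IH andbT.
Qed.

Lemma Mg_self S vs : allsz (size S) vs -> Mg S vs vs = S.
Proof.
elim: vs S => [|v vs IH] S //= /andP [/eqP Hv Hvs].
by rewrite eqmask_self Hv andmask_true IH.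
Qed.


Lemma greedy_real (s s1 q : R) : Rle 0 s -> Rle 1 q -> Rle s (Rmult 2 s1) ->
  Rle s (Rmult (Rminus (Rmult 2 s1) s) (Rminus (Rmult 2 s1) s)) ->
  Rle (Rdiv (Rplus s (sqrt (Rmult s (Rminus (Rmult 2 q) 1)))) (Rmult 2 q))
      (Rdiv (Rplus s1 (sqrt (Rmult s1 (Rminus q 1)))) q).
Proof.
move=> Hs Hq H1 H2.
have Hs1 : Rle 0 s1 by lra.
have Ha : Rle 0 (sqrt s) by apply: sqrt_pos.
have Haa : Rmult (sqrt s) (sqrt s) = s by apply: sqrt_sqrt.
have HA : Rle 0 (sqrt (Rmult s1 (Rminus q 1))) by apply: sqrt_pos.
have HAA : Rmult (sqrt (Rmult s1 (Rminus q 1))) (sqrt (Rmult s1 (Rminus q 1))) = Rmult s1 (Rminus q 1)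
  by apply: sqrt_sqrt; nra.
have HB : Rle 0 (sqrt (Rmult s (Rminus (Rmult 2 q) 1))) by apply: sqrt_pos.
have HBB : Rmult (sqrt (Rmult s (Rminus (Rmult 2 q) 1))) (sqrt (Rmult s (Rminus (Rmult 2 q) 1)))
   = Rmult s (Rminus (Rmult 2 q) 1) by apply: sqrt_sqrt; nra.
move: Ha Haa HA HAA HB HBB.
set a := sqrt s; set A := sqrt (Rmult s1 _); set B := sqrt (Rmult s _).
move=> Ha Haa HA HAA HB HBB.
have Hd : Rle a (Rminus (Rmult 2 s1) s) by nra.
have Hk : Rle B (Rplus a (Rmult 2 A)) by nra.
have Hq0 : Rlt 0 q by lra.
have -> : Rdiv (Rplus s1 A) q = Rdiv (Rplus (Rmult 2 s1) (Rmult 2 A)) (Rmult 2 q) by field; lra.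
apply: Rmult_le_compat_r; last lra.
apply/Rlt_le/Rinv_0_lt_compat; lra.
Qed.

Lemma INR_pow2_ge1 k : Rle 1 (INR (2 ^ k)).
Proof. apply: (le_INR 1); apply/leP; by rewrite expn_gt0. Qed.

Lemma INR_expS k : INR (2 ^ k.+1) = Rmult 2 (INR (2 ^ k)).
Proof. by rewrite expnS mult_INR. Qed.

Lemma all_inRM_sz r m cs : all (inRM r m) cs -> allsz (2 ^ m) cs.
Proof. by elim: cs => [|c cs IH] //= /andP [/inRM_size -> /IH ->]; rewrite eqxx. Qed.

Lemma greedy m : 0 < m -> forall vs S, size S = 2 ^ m -> allsz (2 ^ m) vs ->
  exists cs, size cs = size vs /\ all (inRM 1 m) cs /\
   Rle (Rdiv (Rplus (INR (count id S)) (sqrt (Rmult (INR (count id S)) (Rminus (INR (2 ^ size vs)) 1))))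
             (INR (2 ^ size vs)))
      (INR (count id (Mg S vs cs))).
Proof.
move=> Hm; elim=> [|v vs IH] S HS Hvs.
  exists [::]; split => //; split => //=.
  rewrite /=.
  have -> : Rminus 1 1 = R0 by lra.
  rewrite Rmult_0_r sqrt_0 Rplus_0_r; lra.
move: Hvs => /= /andP [/eqP Hv Hvs].
have [c [Hc [H1 H2]]] := step _ _ _ Hm HS Hv.
set S1 := andmask S (eqmask v c) in H1 H2.
have HS1 : size S1 = 2 ^ m by rewrite size_andmask size_eqmask HS Hv (inRM_size _ _ _ Hc) !minnn.
have [cs [Hcs [Hall Hb]]] := IH S1 HS1 Hvs.
exists (c :: cs); split; first by rewrite /= Hcs.
split; first by rewrite /= Hc Hall.
rewrite [Mg _ _ _]/= -/S1.
apply: Rle_trans Hb.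
rewrite [size _]/= INR_expS.
apply: greedy_real.
- exact: pos_INR.
- exact: INR_pow2_ge1.
- by rewrite -(mult_INR 2); apply: le_INR; apply/leP.
- have := IZR_le _ _ H2.
  by rewrite mult_IZR !minus_IZR !mult_IZR -!INR_IZR_INZ.
Qed.


Definition Fb (k r m : nat) : R :=
  Rplus (Rdiv (INR (2 ^ m)) (INR (2 ^ k)))
        (Rmult (Rdiv (sqrt (Rminus (INR (2 ^ k)) 1)) (INR (2 ^ k))) (INR 'C(m, r))).

Lemma full_real k m : 0 < m -> Rle (Fb k m m) (INR (2 ^ m)).
Proof.
move=> Hm; rewrite /Fb binn /=.
have HK := INR_pow2_ge1 k.
have HN : Rle 2 (INR (2 ^ m)).
  apply: (le_INR 2); apply/leP; case: m Hm => // m _; rewrite expnS; have := expn_gt0 2 m; lia.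
have Hy : Rle (sqrt (Rminus (INR (2 ^ k)) 1)) (Rminus (INR (2 ^ k)) 1).
  case: k HK => [|k] HK.
    rewrite expn0 /=. have -> : Rminus 1 1 = R0 by lra. rewrite sqrt_0; lra.
  have HK2 : Rle 2 (INR (2 ^ k.+1)) by rewrite INR_expS; have := INR_pow2_ge1 k; lra.
  have H0 := sqrt_pos (Rminus (INR (2 ^ k.+1)) 1).
  have H1 : Rmult (sqrt (Rminus (INR (2 ^ k.+1)) 1)) (sqrt (Rminus (INR (2 ^ k.+1)) 1)) = Rminus (INR (2 ^ k.+1)) 1
    by apply: sqrt_sqrt; lra.
  nra.
move: Hy HK HN; set y := sqrt _; set K := INR (2 ^ k); set N := INR (2 ^ m) => Hy HK HN.
apply: (Rmult_le_reg_r K); first lra.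
have -> : Rmult (Rplus (Rdiv N K) (Rmult (Rdiv y K) 1)) K = Rplus N y by field; lra.
nra.
Qed.

Lemma gen_real k m s : Rle (INR (2 ^ m)) s -> m * m <= 2 ^ m ->
  Rle (Fb k 1 m) (Rdiv (Rplus s (sqrt (Rmult s (Rminus (INR (2 ^ k)) 1)))) (INR (2 ^ k))).
Proof.
move=> Hs Hmm; rewrite /Fb bin1.
have HK := INR_pow2_ge1 k.
have HN : Rle (INR (m * m)) (INR (2 ^ m)) by apply: le_INR; apply/leP.
rewrite mult_INR in HN.
have Hm0 := pos_INR m.
have Hsq : Rle (sqrt (Rminus (INR (2 ^ k)) 1)) (sqrt (Rminus (INR (2 ^ k)) 1)) by lra.
have HN0 := pos_INR (2 ^ m).
rewrite sqrt_mult; [|lra|lra].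
have H0 := sqrt_pos s.
have H1 : Rmult (sqrt s) (sqrt s) = s by apply: sqrt_sqrt; lra.
have Hy0 := sqrt_pos (Rminus (INR (2 ^ k)) 1).
have Hms : Rle (INR m) (sqrt s) by nra.
move: Hms Hy0 HK Hs; set y := sqrt (Rminus _ 1); set K := INR (2 ^ k); set N := INR (2 ^ m) => Hms Hy0 HK Hs.
apply: (Rmult_le_reg_r K); first lra.
have -> : Rmult (Rplus (Rdiv N K) (Rmult (Rdiv y K) (INR m))) K = Rplus N (Rmult y (INR m)) by field; lra.
have -> : Rmult (Rdiv (Rplus s (Rmult (sqrt s) y)) K) K = Rplus s (Rmult (sqrt s) y) by field; lra.
nra.
Qed.

Lemma m3_real k s1 : Rle 6 s1 ->
  Rle (Fb k.+1 1 3) (Rdiv (Rplus s1 (sqrt (Rmult s1 (Rminus (INR (2 ^ k)) 1)))) (INR (2 ^ k))).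
Proof.
move=> Hs; rewrite /Fb bin1 (INR_expS k).
have HK := INR_pow2_ge1 k.
have -> : INR (2 ^ 3) = Rmult 2 4 by rewrite !INR_expS expn0 /=; lra.
have -> : INR 3 = Rplus 2 1 by rewrite /=; lra.
move: HK; set q := INR (2 ^ k) => HK.
have Hx : Rle (sqrt (Rmult 6 (Rminus q 1))) (sqrt (Rmult s1 (Rminus q 1))).
  apply: sqrt_le_1_alt; nra.
have Hx0 := sqrt_pos (Rmult 6 (Rminus q 1)).
have Hxx : Rmult (sqrt (Rmult 6 (Rminus q 1))) (sqrt (Rmult 6 (Rminus q 1))) = Rmult 6 (Rminus q 1)
  by apply: sqrt_sqrt; nra.
have Hy0 := sqrt_pos (Rminus (Rmult 2 q) 1).
have Hyy : Rmult (sqrt (Rminus (Rmult 2 q) 1)) (sqrt (Rminus (Rmult 2 q) 1)) = Rminus (Rmult 2 q) 1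
  by apply: sqrt_sqrt; nra.
move: Hx Hx0 Hxx Hy0 Hyy.
set x := sqrt (Rmult 6 _); set x' := sqrt (Rmult s1 _); set y := sqrt (Rminus _ 1) => Hx Hx0 Hxx Hy0 Hyy.
have Hk : Rle (Rmult 3 y) (Rplus 4 (Rmult 2 x)) by nra.
apply: (Rmult_le_reg_r (Rmult 2 q)); first lra.
have -> : Rmult (Rplus (Rdiv (Rmult 2 4) (Rmult 2 q)) (Rmult (Rdiv y (Rmult 2 q)) (Rplus 2 1))) (Rmult 2 q)
   = Rplus (Rmult 2 4) (Rmult 3 y) by field; lra.
have -> : Rmult (Rdiv (Rplus s1 x') q) (Rmult 2 q) = Rmult 2 (Rplus s1 x') by field; lra.
lra.
Qed.

Lemma rec_real k r m : Fb k r.+1 m.+1 = Rplus (Fb k r.+1 m) (Fb k r m).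
Proof. rewrite /Fb binS plus_INR INR_expS; field; have := INR_pow2_ge1 k; lra. Qed.


Lemma sq_le_pow n : n != 3 -> n * n <= 2 ^ n.
Proof.
case: n => [|[|[|[|n]]]] // _.
elim: n => [|n IH] //.
rewrite expnS. have : 4 <= n.+4 by lia. nia.
Qed.

Lemma Fb0 r m : Fb 0 r m = INR (2 ^ m).
Proof.
rewrite /Fb expn0 /=.
have -> : Rminus 1 1 = R0 by lra.
rewrite sqrt_0; field.
Qed.

Lemma allsz_take h vs : allsz (h + h) vs -> allsz h (map (take h) vs).
Proof. by elim: vs => [|v vs IH] //= /andP [/eqP Hv /IH ->]; rewrite size_takel ?Hv ?eqxx //; lia. Qed.

Lemma allsz_drop h vs : allsz (h + h) vs -> allsz h (map (drop h) vs).
Proof. by elim: vs => [|v vs IH] //= /andP [/eqP Hv /IH ->]; rewrite size_drop Hv addnK eqxx. Qed.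

Lemma allsz_xor h a b : allsz h a -> allsz h b -> allsz h [seq xorw p.1 p.2 | p <- zip a b].
Proof.
elim: a b => [|x a IH] [|y b] //= /andP [/eqP Hx Ha] /andP [/eqP Hy Hb].
by rewrite size_xorw Hx Hy minnn eqxx IH.
Qed.

Lemma xorw_invol u w : size u = size w -> xorw u (xorw u w) = w.
Proof.
elim: u w => [|x u IH] [|y w] //= [H].
have -> : xorw (x :: u) (xorw (x :: u) (y :: w)) = (x (+) (x (+) y)) :: xorw u (xorw u w) by [].
by rewrite IH // addKb.
Qed.

Lemma all_inRM_cat r m us ws : 0 < r -> r <= m -> size us = size ws ->
  all (inRM r m) us -> all (inRM r.-1 m) ws ->
  all (inRM r m.+1) [seq p.1 ++ p.2 | p <- zip us [seq xorw p.1 p.2 | p <- zip us ws]].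
Proof.
move=> Hr Hrm.
elim: us ws => [|u us IH] [|w ws] //= [E] /andP [Hu Hus] /andP [Hw Hws].
rewrite IH // andbT. change (inRM r m.+1 (u ++ xorw u w)). rewrite inRM_S //.
have Su := inRM_size _ _ _ Hu; have Sw := inRM_size _ _ _ Hw.
rewrite size_cat size_xorw Su Sw minnn expnS mul2n -addnn eqxx andTb.
rewrite take_size_cat // Hu andTb drop_size_cat // xorw_invol ?Su ?Sw //.
Qed.

Lemma all_inRM_full r m vs : 0 < r -> m.+1 <= r -> allsz (2 ^ m.+1) vs -> all (inRM r m.+1) vs.
Proof.
move=> Hr Hm; elim: vs => [|v vs IH] //= /andP [Hv Hvs].
by rewrite -/(inRM r m.+1 v) inRM_full // Hv IH.
Qed.

Lemma core m : forall r, 0 < r -> r <= m -> forall vs, allsz (2 ^ m) vs ->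
  exists cs, size cs = size vs /\ all (inRM r m) cs /\
    Rle (Fb (size vs) r m) (INR (count id (Mg (nseq (2 ^ m) true) vs cs))).
Proof.
elim: m => [|m IH] r Hr Hrm vs Hvs; first by lia.
have HN : count id (nseq (2 ^ m.+1) true) = 2 ^ m.+1 by rewrite count_nseq mul1n.
case: (eqVneq r m.+1) => Hrm1.
  subst r; exists vs; split => //; split; first exact: all_inRM_full.
  rewrite Mg_self ?size_nseq // HN.
  exact: full_real.
have Hrm' : r <= m by lia.
case: (eqVneq r 1) => Hr1.
  subst r.
  case: (eqVneq m.+1 3) => H3.
    case: vs Hvs => [|v vs] Hvs.
      exists [::]; split => //; split => //.
      by rewrite Fb0 [Mg _ _ _]/= HN; apply: Rle_refl.
    move: Hvs => /= /andP [/eqP Hv Hvs].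
    have HS : size (nseq (2 ^ m.+1) true) = 2 ^ m.+1 by rewrite size_nseq.
    have [c [Hc [H1 H2]]] := step _ _ _ (ltn0Sn m) HS Hv.
    set S1 := andmask _ (eqmask v c) in H1 H2.
    have HS1 : size S1 = 2 ^ m.+1 by rewrite size_andmask size_eqmask HS Hv (inRM_size _ _ _ Hc) !minnn.
    have [cs [Hcs [Hall Hb]]] := greedy _ (ltn0Sn m) vs S1 HS1 Hvs.
    exists (c :: cs); split; first by rewrite /= Hcs.
    split; first by apply/andP; split.
    rewrite [Mg _ _ _]/= -/S1.
    apply: Rle_trans Hb.
    rewrite [size _]/= H3.
    apply: m3_real.
    rewrite HN H3 in H1 H2.
    have : 6 <= count id S1 by move: H1 H2; rewrite (_ : 2 ^ 3 = 8) //; nia.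
    move=> H6; apply: Rle_trans (le_INR 6 _ (leP H6)); rewrite /=; lra.
  have [cs [Hcs [Hall Hb]]] := greedy _ (ltn0Sn m) vs (nseq (2 ^ m.+1) true) (size_nseq _ _) Hvs.
  exists cs; split => //; split => //.
  apply: Rle_trans Hb.
  rewrite HN.
  apply: gen_real; first exact: Rle_refl.
  exact: sq_le_pow.
case: r Hr Hrm Hrm1 Hr1 Hrm' => [//|r] _ Hrm Hrm1 Hr1 Hrm'.
have Hr0 : 0 < r by lia.
set h := 2 ^ m.
have Hh : 2 ^ m.+1 = h + h by rewrite expnS mul2n addnn.
rewrite Hh in Hvs.
have [us [Hus [Hallu Hbu]]] := IH r.+1 (ltn0Sn r) Hrm' _ (allsz_take _ _ Hvs).
rewrite size_map in Hus.
have Hszu := all_inRM_sz _ _ _ Hallu.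
set rs := [seq xorw p.1 p.2 | p <- zip (map (drop h) vs) us].
have Hrs : allsz h rs by apply: allsz_xor => //; apply: allsz_drop.
have [ws [Hws [Hallw Hbw]]] := IH r Hr0 (ltnW Hrm') rs Hrs.
have Hszw := all_inRM_sz _ _ _ Hallw.
set xs := [seq xorw p.1 p.2 | p <- zip us ws].
have Hsize_rs : size rs = size vs by rewrite size_map size_zip size_map Hus minnn.
exists [seq p.1 ++ p.2 | p <- zip us xs]; split.
  by rewrite size_map size_zip size_map size_zip Hws Hsize_rs Hus; lia.
split.
  apply: all_inRM_cat => //; by rewrite Hws Hsize_rs Hus.
have Hxs : allsz h xs by exact: allsz_xor.
have Hsxs : size us = size xs by rewrite size_map size_zip Hws Hsize_rs Hus minnn.
rewrite Hh nseqD (Mg_cat h h) ?size_nseq //.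
rewrite (Mg_xor h) //; last first.
- by rewrite Hws Hsize_rs.
- by rewrite size_map Hus.
- exact: allsz_drop.
rewrite -/rs count_cat plus_INR rec_real.
apply: Rplus_le_compat.
  by rewrite size_map in Hbu.
by rewrite Hsize_rs in Hbw.
Qed.


Lemma nth_andmask S E j : size S = size E -> j < size S ->
  nth false (andmask S E) j = nth false S j && nth false E j.
Proof. by move=> H Hj; rewrite (nth_map (false, false)) ?size_zip -?H ?minnn // nth_zip. Qed.

Lemma nth_eqmask S E j : size S = size E -> j < size S ->
  nth false (eqmask S E) j = (nth false S j == nth false E j).
Proof. by move=> H Hj; rewrite (nth_map (false, false)) ?size_zip -?H ?minnn // nth_zip. Qed.

Lemma nth_Mg n S vs cs j : size S = n -> allsz n vs -> allsz n cs -> size vs = size cs -> j < n ->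
  nth false (Mg S vs cs) j =
  nth false S j && all (fun p : seq bool * seq bool => nth false p.1 j == nth false p.2 j) (zip vs cs).
Proof.
elim: vs cs S => [|v vs IH] [|c cs] S //; first by move=> *; rewrite /= andbT.
move=> HS /andP [/eqP Hv Hvs] /andP [/eqP Hc Hcs] [E] Hj /=.
rewrite IH //; last by rewrite size_andmask size_eqmask HS Hv Hc !minnn.
rewrite nth_andmask; last by rewrite HS.
  rewrite nth_eqmask; [by rewrite andbA | by rewrite Hv Hc | by rewrite Hv].
by rewrite size_eqmask HS Hv Hc minnn.
Qed.

Lemma count_card n (f : nat -> bool) : count f (iota 0 n) = #|[set j : 'I_n | f j]|.
Proof.
rewrite -val_enum_ord count_map cardsE cardE /enum_mem -enumT size_filter.
rewrite (@eq_filter _ _ predT) // filter_predT.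
by apply: eq_count => j; rewrite !inE.
Qed.

Lemma bridge t m (v : mat t (2 ^ m)) cs : size cs = t -> allsz (2 ^ m) cs ->
  dist_t v [ffun i => insubd (v i) (nth [::] cs i) : word (2 ^ m)] +
  count id (Mg (nseq (2 ^ m) true) [seq tval (v i) | i <- enum 'I_t] cs) = 2 ^ m.
Proof.
move=> Hsz Hcs.
set c := [ffun i => _].
set vs := [seq tval (v i) | i <- enum 'I_t].
have Hvs : allsz (2 ^ m) vs.
  apply/allP => w /mapP [i _ ->]; by rewrite size_tuple.
have Hsvs : size vs = size cs by rewrite size_map size_enum_ord Hsz.
set M := Mg _ vs cs.
have HM : size M = 2 ^ m by apply: (size_Mg (2 ^ m)) => //; rewrite size_nseq.
have Hci : forall i : 'I_t, tval (c i) = nth [::] cs i.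
  move=> i; rewrite /c ffunE insubdK //.
  by move/allP: Hcs => /(_ (nth [::] cs i)); apply; rewrite mem_nth // Hsz.
have Hvi : forall i : 'I_t, nth [::] vs i = tval (v i).
  by move=> i; rewrite (nth_map i) ?size_enum_ord // nth_ord_enum.
set P := [set j : 'I_(2 ^ m) | [forall i, tnth (v i) j == tnth (c i) j]].
have -> : count id M = #|P|.
  rewrite -(mkseq_nth false M) HM /mkseq count_map count_card.
  apply: eq_card => j; rewrite !inE.
  rewrite /M (nth_Mg (2 ^ m)) ?size_nseq //.
  rewrite nth_nseq ltn_ord andTb.
  apply/(all_nthP ([::], [::]))/forallP => [H i | H k].
    have := H i; rewrite size_zip Hsvs minnn Hsz ltn_ord => /(_ isT).
    rewrite nth_zip // /= Hvi -Hci !(tnth_nth false) //.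
  rewrite size_zip Hsvs minnn Hsz => Hk.
  rewrite nth_zip //= (_ : k = Ordinal Hk) // Hvi -Hci.
  by have := H (Ordinal Hk); rewrite !(tnth_nth false).
have -> : dist_t v c = #|~: P|.
  rewrite /dist_t; apply: eq_card => j; rewrite !inE negb_forall.
  by apply: eq_existsb => i.
by rewrite addnC cardsC card_ord.
Qed.


Lemma INR_pow2 k : INR (2 ^ k) = pow 2 k.
Proof. elim: k => [|k IH]; first by reflexivity. by rewrite INR_expS IH. Qed.

Theorem lemma17 (m t r : nat) (hr1 : 1 <= r) (hrm : r <= m) :
  Rle (INR (Rt_RM t r m))
      (Rminus (Rmult (Rminus 1 (Rinv (pow 2 t))) (pow 2 m))
              (Rmult (Rdiv (sqrt (Rminus (pow 2 t) 1)) (pow 2 t))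
                     (INR 'C(m, r)))).
Proof.
set B := Rminus _ _.
have HB : forall v : mat t (2 ^ m), exists c : mat t (2 ^ m), rows_in (RM r m) c /\ Rle (INR (dist_t v c)) B.
  move=> v.
  set vs := [seq tval (v i) | i <- enum 'I_t].
  have Hvs : allsz (2 ^ m) vs by apply/allP => w /mapP [i _ ->]; rewrite size_tuple.
  have [cs [Hcs [Hall Hb]]] := core m r hr1 hrm vs Hvs.
  have Hsz : size cs = t by rewrite Hcs size_map size_enum_ord.
  have Hcsz := all_inRM_sz _ _ _ Hall.
  exists [ffun i => insubd (v i) (nth [::] cs i) : word (2 ^ m)]; split.
    apply/forallP => i; rewrite unfold_in /RM ffunE insubdK.
      by move/allP: Hall; apply; rewrite mem_nth // Hsz.
    by move/allP: Hcsz => /(_ (nth [::] cs i)); apply; rewrite mem_nth // Hsz.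
  have E := bridge t m v cs Hsz Hcsz.
  have E' : Rplus (INR (dist_t v [ffun i => insubd (v i) (nth [::] cs i) : word (2 ^ m)]))
     (INR (count id (Mg (nseq (2 ^ m) true) vs cs))) = INR (2 ^ m).
    by rewrite -plus_INR; apply: f_equal; exact: E.
  have Hsvs : size vs = t by rewrite size_map size_enum_ord.
  rewrite Hsvs in Hb.
  have HFB : B = Rminus (INR (2 ^ m)) (Fb t r m).
    rewrite /B /Fb !INR_pow2; field.
    have := INR_pow2_ge1 t; rewrite INR_pow2; lra.
  rewrite HFB; lra.
rewrite /Rt_RM /Rt.
set rho := find _ _.
case: (Rle_lt_dec (INR rho) B) => // Hlt; exfalso.
have Hfs : rho <= size (iota 0 (2 ^ m).+1) by apply: find_size.
rewrite size_iota in Hfs.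
case Hr : rho Hlt Hfs => [|k] Hlt Hfs.
  have [c [_ Hc]] := HB [ffun _ => nseq_tuple (2 ^ m) false].
  have := pos_INR (dist_t [ffun _ => nseq_tuple (2 ^ m) false] c).
  rewrite /= in Hlt; lra.
have Hk : k < rho by rewrite Hr.
have := before_find 0 Hk; rewrite nth_iota // add0n.
move/negbT; rewrite /covers negb_forall => /existsP [v].
rewrite negb_exists => /forallP Hv.
have [c [Hc Hd]] := HB v.
have := Hv c; rewrite Hc andTb -ltnNge => Hgt.
have : Rle (INR k.+1) (INR (dist_t v c)) by apply: le_INR; apply/leP.
lra.
Qed.
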